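(* Let $d\ge1$ and let $X_1,\dots,X_d$ be pairwise independent random variables with $X_i\sim\mathrm{Bernoulli}(p_i)$. Let $\tilde X_1,\dots,\tilde X_d$ be mutually independent with $\tilde X_i$ equal in distribution to $X_i$. Set $Z=\sum_{i=1}^dX_i$ and $\tilde Z=\sum_{i=1}^d\tilde X_i$. Then $\mathbb{P}(Z>0)\ge\frac12\mathbb{P}(\tilde Z>0)$. *)

(* Defs.v *)
From HB Require Import structures.
From mathcomp Require Import all_boot all_order all_algebra.
From mathcomp Require Import all_classical all_reals all_analysis.
Set Implicit Arguments. Unset Strict Implicit. Unset Printing Implicit Defensive.
Import Order.TTheory GRing.Theory Num.Theory.
Local Open Scope classical_set_scope.
Local Open Scope ring_scope.

Definition pairwise_independent d d' (T : measurableType d)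
  (T' : measurableType d') (R : realType) (P : probability T R)
  (I : finType) (X : I -> {RV P >-> T'}) : Prop :=
  forall i j : I, i != j ->
  forall A B : set T', measurable A -> measurable B ->
  P (X i @^-1` A `&` X j @^-1` B) = (P (X i @^-1` A) * P (X j @^-1` B))%E.

Definition mutually_independent d d' (T : measurableType d)
  (T' : measurableType d') (R : realType) (P : probability T R)
  (I : finType) (X : I -> {RV P >-> T'}) : Prop :=
  forall (S : {set I}) (A : I -> set T'), (forall i, measurable (A i)) ->
  P (\bigcap_(i in [set i | i \in S]) (X i @^-1` A i)) =
  (\prod_(i in S) P (X i @^-1` A i))%E.

(* Main.v *)
Require Import Defs.
From HB Require Import structures.
From mathcomp Require Import all_boot all_order all_algebra.
From mathcomp Require Import all_classical all_reals all_analysis.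
From mathcomp Require Import ring lra.
Set Implicit Arguments. Unset Strict Implicit.
Import Order.TTheory GRing.Theory Num.Theory.
Local Open Scope classical_set_scope.
Local Open Scope ring_scope.

Section Atoms.
Variables (R : realType) (d : measure_display) (T : measurableType d)
  (mu : probability T R) (n : nat) (X : 'I_n -> {mfun T >-> bool}).

Definition vec t : {ffun 'I_n -> bool} := [ffun i => X i t].
Definition atom v := [set t | vec t = v].

Lemma atom_meas v : measurable (atom v).
Proof.
have -> : atom v = \bigcap_(i in [set: 'I_n]) (X i @^-1` [set v i]).
  apply/seteqP; split => t /=.
  - by rewrite /atom /= => Ht i _; subst v; rewrite /preimage /= /vec ffunE.
  - by rewrite /atom /= => H; apply/ffunP => i; rewrite ffunE; exact: H.
apply: fin_bigcap_measurable; first exact: finite_finset.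
move=> i _; rewrite -[X in measurable X]setTI; exact: (measurable_funP (X i)).
Qed.

Lemma atoms_sum (F : pred {ffun 'I_n -> bool}) :
  mu [set t | F (vec t)] = (\sum_(v : {ffun 'I_n -> bool} | F v) mu (atom v))%E.
Proof.
rewrite bigfs ?index_enum_uniq; last by move=> i _; rewrite mem_index_enum.
rewrite -measure_fin_bigcup //.
- congr (mu _); apply/seteqP; split => t /=.
  + by move=> Ft; exists (vec t) => //; rewrite /= mem_setE.
  + by move=> [v /= Fv Hv]; rewrite /atom /= in Hv; rewrite Hv; move: Fv; rewrite /= ?inE.
- by move=> v w _ _ [t [/= <- <-]].
- by move=> v _; exact: atom_meas.
- by [].
Qed.

Definition q v := fine (mu (atom v)).

Lemma muE v : mu (atom v) = (q v)%:E.
Proof. by rewrite /q fineK // fin_num_measure //; exact: atom_meas. Qed.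

Lemma q_ge0 v : 0 <= q v.
Proof. exact: fine_ge0. Qed.

Lemma atoms_sumR (F : pred {ffun 'I_n -> bool}) :
  mu [set t | F (vec t)] = (\sum_(v : {ffun 'I_n -> bool} | F v) q v)%:E.
Proof. by rewrite atoms_sum -sumEFin; apply: eq_bigr => v _; rewrite muE. Qed.

Lemma q_sum1 : \sum_v q v = 1.
Proof.
have := atoms_sumR predT.
have -> : [set t | predT (vec t)] = setT by apply/seteqP; split.
by rewrite probability_setT => -[].
Qed.


Definition N (v : {ffun 'I_n -> bool}) : R := \sum_i ((v i)%:R : R).

Lemma pA i : mu (X i @^-1` [set true]) = (\sum_(v : {ffun 'I_n -> bool} | v i) q v)%:E.
Proof.
rewrite -(atoms_sumR (fun v : {ffun 'I_n -> bool} => v i)); congr (mu _).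
by apply/seteqP; split => t /=; rewrite /vec ffunE.
Qed.

Lemma pAB i j : mu (X i @^-1` [set true] `&` X j @^-1` [set true]) =
  (\sum_(v : {ffun 'I_n -> bool} | v i && v j) q v)%:E.
Proof.
rewrite -(atoms_sumR (fun v : {ffun 'I_n -> bool} => v i && v j)); congr (mu _).
apply/seteqP; split => t /=; rewrite /vec !ffunE.
  by move=> [-> ->].
by move=> /andP[-> ->].
Qed.

Lemma pZ : mu [set t | 0 < \sum_i ((X i t)%:R : R)] = (\sum_(v : {ffun 'I_n -> bool} | 0 < N v) q v)%:E.
Proof.
rewrite -(atoms_sumR (fun v : {ffun 'I_n -> bool} => 0 < N v)); congr (mu _).
apply/seteqP; split => t /=; rewrite /N /vec;
  have -> : \sum_i (([ffun i0 => X i0 t] : {ffun 'I_n -> bool}) i)%:R = \sum_(i < n) ((X i t)%:R : R)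
    by apply: eq_bigr => i _; rewrite ffunE.
  all: by [].
Qed.

Lemma sumN : \sum_v q v * N v = \sum_i \sum_(v : {ffun 'I_n -> bool} | v i) q v.
Proof.
under eq_bigr do rewrite /N mulr_sumr.
rewrite exchange_big; apply: eq_bigr => i _.
rewrite [RHS]big_mkcond; apply: eq_bigr => v _.
by case: (v i); rewrite ?mulr1 ?mulr0.
Qed.

Lemma sumN2 : \sum_v q v * N v ^+ 2 = \sum_i \sum_j \sum_(v : {ffun 'I_n -> bool} | v i && v j) q v.
Proof.
under eq_bigr do rewrite expr2 /N mulr_suml mulr_sumr.
rewrite exchange_big; apply: eq_bigr => i _.
under eq_bigr do rewrite mulr_sumr mulr_sumr.
rewrite exchange_big; apply: eq_bigr => j _.
rewrite [RHS]big_mkcond; apply: eq_bigr => v _.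
by case: (v i); case: (v j); rewrite /= ?mulr1 ?mulr0 ?mul0r.
Qed.

Lemma Nnat v : N v = (\sum_i (v i : nat))%:R.
Proof. by rewrite /N natr_sum. Qed.

End Atoms.
Arguments N {R n} v.
Arguments Nnat {R n} v.

Theorem proposition10 (R : realType) (n : nat) (hn : (0 < n)%N)
  (p : 'I_n -> R) (hp : forall i, 0 <= p i <= 1)
  (dT : measure_display) (T : measurableType dT) (P : probability T R)
  (X : 'I_n -> {RV P >-> bool})
  (hX : forall i, distribution P (X i) =1 bernoulli_prob (p i))
  (hpair : pairwise_independent X)
  (dT' : measure_display) (T' : measurableType dT') (P' : probability T' R)
  (Xt : 'I_n -> {RV P' >-> bool})
  (hXt : forall i, distribution P' (Xt i) =1 distribution P (X i))
  (hmut : mutually_independent Xt) :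
  let Z := fun t => \sum_(i < n) ((X i t : bool)%:R : R) in
  let Zt := fun t => \sum_(i < n) ((Xt i t : bool)%:R : R) in
  (P [set t | (0 < Z t)%R] >= (2^-1)%:E * P' [set t | (0 < Zt t)%R])%E.
Proof.
cbv zeta.
have hb i : P (X i @^-1` [set true]) = (p i)%:E.
  have := hX i [set true]; rewrite /distribution /pushforward /= => ->.
  rewrite bernoulli_probE // !diracE mem_set //= memNset //.
  by rewrite mule1 mule0 adde0.
have hb' i : P' (Xt i @^-1` [set true]) = (p i)%:E.
  have := hXt i [set true]; rewrite /distribution /pushforward /= => ->.
  by rewrite hb.
rewrite (pZ P X) (pZ P' Xt) -EFinM lee_fin.
set s := \sum_i p i.
have s0 : 0 <= s by apply: sumr_ge0 => i _; case/andP: (hp i).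
have hp1 i : \sum_(v : {ffun 'I_n -> bool} | v i) q P X v = p i.
  by apply/EFin_inj; rewrite -pA hb.
have hp1' i : \sum_(v : {ffun 'I_n -> bool} | v i) q P' Xt v = p i.
  by apply/EFin_inj; rewrite -pA hb'.
have hp2 i j : i != j -> \sum_(v : {ffun 'I_n -> bool} | v i && v j) q P X v = p i * p j.
  move=> ij; apply/EFin_inj; rewrite -pAB EFinM -!hb; exact: hpair.
have hp3 i : \sum_(v : {ffun 'I_n -> bool} | v i && v i) q P X v = p i.
  by rewrite -(hp1 i); apply: eq_bigl => v; rewrite andbb.
have hM : \sum_v q P X v * N v ^+ 2 <= s + s ^+ 2.
  rewrite sumN2.
  apply: (@le_trans _ _ (\sum_i \sum_j (p i * p j + (if i == j then p i else 0)))).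
    apply: ler_sum => i _; apply: ler_sum => j _.
    case: eqVneq => [<-|ij].
      rewrite hp3 lerDr; apply: mulr_ge0; by case/andP: (hp i).
    by rewrite hp2 // addr0.
  under eq_bigr do rewrite big_split /=.
  rewrite big_split /= addrC expr2; apply: lerD.
    apply: ler_sum => i _; rewrite -big_mkcond /= (big_pred1 i) //.
  rewrite /s mulr_suml; apply: ler_sum => i _; rewrite mulr_sumr.
  by [].
set a := (1 + s)^-1.
have s1 : 0 < 1 + s by rewrite ltr_pwDl.
have ha : a * (1 + s) = 1 by rewrite mulVf // gt_eqF.
have a0 : 0 <= a by rewrite invr_ge0 ltW.
set PZ := \sum_(v | 0 < N v) q P X v.
set PZt := \sum_(v | 0 < N v) q P' Xt v.
have hPZ : a * s <= PZ.
  have -> : PZ = \sum_v q P X v * ((0 < N (R:=R) v)%R : nat)%:R.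
    rewrite /PZ big_mkcond; apply: eq_bigr => v _.
    by case: ifP; rewrite ?mulr1 ?mulr0.
  apply: (@le_trans _ _ (\sum_v q P X v * (2 * a * N v - a ^+ 2 * N v ^+ 2))).
    have -> : \sum_v q P X v * (2 * a * N v - a ^+ 2 * N v ^+ 2) =
      2 * a * (\sum_v q P X v * N v) - a ^+ 2 * (\sum_v q P X v * N v ^+ 2).
      rewrite !mulr_sumr -sumrB; apply: eq_bigr => v _; ring.
    rewrite sumN.
    have -> : \sum_i \sum_(v : {ffun 'I_n -> bool} | v i) q P X v = s.
      by apply: eq_bigr => i _; rewrite hp1.
    apply: (@le_trans _ _ (2 * a * s - a ^+ 2 * (s + s ^+ 2))).
      have -> : a ^+ 2 * (s + s ^+ 2) = a * s * (a * (1 + s)) by ring.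
      rewrite ha mulr1; lra.
    rewrite lerD2l lerN2; apply: ler_wpM2l => //; exact: exprn_ge0.
  apply: ler_sum => v _; apply: ler_wpM2l; first exact: q_ge0.
  rewrite (Nnat v); set k := (\sum_i _)%N.
  case: k => [|k]; first by rewrite !mulr0 expr0n /= mulr0 subr0.
  rewrite ltr0Sn /= -subr_ge0.
  have -> : 1 - (2 * a * k.+1%:R - a ^+ 2 * k.+1%:R ^+ 2) = (1 - a * k.+1%:R) ^+ 2 by ring.
  exact: sqr_ge0.
have hPZt1 : PZt <= s.
  rewrite /PZt big_mkcond /s -(eq_bigr _ (fun i _ => hp1' i)) -sumN.
  apply: ler_sum => v _; rewrite (Nnat v); set k := (\sum_i _)%N.
  case: k => [|k]; first by rewrite ltxx mulr0.
  rewrite ltr0Sn -[X in X <= _]mulr1; apply: ler_wpM2l; first exact: q_ge0.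
  by rewrite ler1n.
have hPZt2 : PZt <= 1.
  rewrite -(q_sum1 P' Xt) /PZt big_mkcond; apply: ler_sum => v _.
  by case: ifP => // _; exact: q_ge0.
have hPZt0 : 0 <= PZt by apply: sumr_ge0 => v _; exact: q_ge0.
apply: (@le_trans _ _ (a * s)) => //.
rewrite [X in _ <= X]mulrC /a ler_pdivlMr //; nra.
Qed.
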